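(* Let $n\ge3$. For a lattice $\mathbf L$ let $\mathbf L^r$ be the algebra on $L$ with ternary operations $t_1(x,y,z)=x(y+z)$, $t_h(x,y,z)=xz$ for $2\le h\le n-2$, $t_{n-1}(x,y,z)=z(y+x)$. Let $\mathbf C_k$ be the $k$-element chain $\{0,\dots,k-1\}$ and put $\mathbf A_1=\mathbf A_2=\mathbf C_4^r$, $\mathbf A_3=\mathbf C_2^r$ (with distinguished element $0$). Let $\mathbf A_4$ be an algebra with only ternary operations $t_1,\dots,t_{n-1}$ such that $t_1$ is the first projection, $t_{n-1}$ the third projection and $t_h(x,y,x)=x$ for $2\le h\le n-2$. For $a,d\in A_4$ let $\mathbf B(a,d)$ be the subalgebra of $\mathbf A_1\times\mathbf A_2\times\mathbf A_3\times\mathbf A_4$ with universe the set of elements having at least one of the forms $(\ast,0,\ast,a)$, $(0,0,\ast,\ast)$, $(0,\ast,\ast,d)$, $(\ast,\ast,0,\ast)$. If $\chi$ is a term in the operations $\circ,\cap$ and there are congruences $\tilde\alpha,\tilde\beta,\tilde\gamma$ of $\mathbf A_4$ for which the inclusion $\tilde\alpha(\tilde\beta\circ\tilde\alpha\tilde\gamma\circ\tilde\beta)\subseteq\chi(\tilde\alpha,\tilde\beta,\tilde\gamma)$ fails, then there are $a,d\in A_4$ and congruences $\alpha,\beta,\gamma$ of $\mathbf B=\mathbf B(a,d)$ such that $$\alpha(\beta\circ\alpha\gamma\circ\beta)\subseteq\gamma\circ\alpha\beta\circ\gamma\circ\chi(\alpha,\beta,\gamma)\circ\gamma\circ\alpha\beta\circ\gamma$$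 fails in $\mathbf B$. In particular, if for some odd $r$ the inclusion $\tilde\alpha(\tilde\beta\circ\tilde\alpha\tilde\gamma\circ\tilde\beta)\subseteq\tilde\alpha\tilde\beta\circ\tilde\alpha\tilde\gamma\circ\stackrel{r}{\dots}\circ\tilde\alpha\tilde\beta$ fails in $\mathbf A_4$, then $\alpha(\beta\circ\alpha\gamma\circ\beta)\subseteq\alpha\gamma\circ\alpha\beta\circ\stackrel{r+6}{\dots}\circ\alpha\gamma$ fails in some such $\mathbf B$.
   Context: Lattice operations are denoted by juxtaposition (meet) and $+$ (join); for relations, juxtaposition denotes intersection and $\circ$ composition. $X\circ Y\circ\stackrel{k}{\dots}\circ Z$ is the alternating composition $X\circ Y\circ X\circ\cdots$ with $k$ factors, last factor $Z$. The set $B(a,d)$ is a subuniverse under these hypotheses. *)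

(* Defs.v *)
From mathcomp Require Import all_boot.
Set Implicit Arguments. Unset Strict Implicit. Unset Printing Implicit Defensive.

Definition relP (U : Type) := U -> U -> Prop.

Definition rcomp (U : Type) (X Y : relP U) : relP U :=
  fun x z => exists y, X x y /\ Y y z.
Definition rmeet (U : Type) (X Y : relP U) : relP U := fun x y => X x y /\ Y x y.
Definition rsub (U : Type) (X Y : relP U) : Prop := forall x y, X x y -> Y x y.

Fixpoint altc (U : Type) (X Y : relP U) (k : nat) : relP U :=
  match k with
  | 0 => fun x y => x = y
  | 1 => X
  | S k' => rcomp X (altc Y X k')
  end.

Inductive cterm : Type :=
  | TAlpha | TBeta | TGamma
  | TComp of cterm & cterm
  | TMeet of cterm & cterm.

Fixpoint cterm_eval (U : Type) (a b c : relP U) (t : cterm) : relP U :=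
  match t with
  | TAlpha => a | TBeta => b | TGamma => c
  | TComp t1 t2 => rcomp (cterm_eval a b c t1) (cterm_eval a b c t2)
  | TMeet t1 t2 => rmeet (cterm_eval a b c t1) (cterm_eval a b c t2)
  end.

(* ---------- congruences ----------
   A congruence of the algebra with universe [dom] (a subuniverse of U) and
   ternary operations [ops h], 1 <= h <= n-1, represented as a relation on U
   supported in dom. *)
Definition is_cong (U : Type) (dom : U -> Prop) (n : nat)
  (ops : nat -> U -> U -> U -> U) (R : relP U) : Prop :=
  [/\ (forall x y, R x y -> dom x /\ dom y),
      (forall x, dom x -> R x x),
      (forall x y, R x y -> R y x),
      (forall x y z, R x y -> R y z -> R x z) &
      (forall h, 1 <= h <= n.-1 -> forall x y z x' y' z',
          R x x' -> R y y' -> R z z' -> R (ops h x y z) (ops h x' y' z'))].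

Definition omeet k (x y : 'I_k) : 'I_k := if (x <= y)%N then x else y.
Definition ojoin k (x y : 'I_k) : 'I_k := if (x <= y)%N then y else x.

Definition Lr_op (n k : nat) (h : nat) (x y z : 'I_k) : 'I_k :=
  if h == 1 then omeet x (ojoin y z)
  else if h == n.-1 then omeet z (ojoin y x)
  else omeet x z.

Record tup (T : Type) := Tup { c1 : 'I_4; c2 : 'I_4; c3 : 'I_2; c4 : T }.

Definition prod_op (T : Type) (n : nat) (t : nat -> T -> T -> T -> T)
  (h : nat) (p q r : tup T) : tup T :=
  Tup (Lr_op n h (c1 p) (c1 q) (c1 r)) (Lr_op n h (c2 p) (c2 q) (c2 r))
      (Lr_op n h (c3 p) (c3 q) (c3 r)) (t h (c4 p) (c4 q) (c4 r)).

Definition inB (T : Type) (a d : T) (p : tup T) : Prop :=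
  (c2 p = ord0 /\ c4 p = a) \/ (c1 p = ord0 /\ c2 p = ord0) \/
  (c1 p = ord0 /\ c4 p = d) \/ c3 p = ord0.

(* Main.v *)
Require Import Defs.
From mathcomp Require Import all_boot.
From mathcomp Require Import zify.
From Stdlib Require Import Classical.
Set Implicit Arguments. Unset Strict Implicit. Unset Printing Implicit Defensive.

Lemma not_rsub U (X Y : relP U) : ~ rsub X Y -> exists x y, X x y /\ ~ Y x y.
Proof.
move=> H; apply: NNPP => H'; apply: H => x y Hx; apply: NNPP => Hy.
by apply: H'; exists x, y.
Qed.

Lemma omeet_val k (x y : 'I_k) : nat_of_ord (omeet x y) = minn x y.
Proof.
by rewrite /omeet; case: (leqP x y).
Qed.

Lemma ojoin_val k (x y : 'I_k) : nat_of_ord (ojoin x y) = maxn x y.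
Proof.
by rewrite /ojoin; case: (leqP x y).
Qed.

Lemma Lr_val n k h (x y z : 'I_k) : nat_of_ord (Lr_op n h x y z) =
  if h == 1 then minn x (maxn y z) else if h == n.-1 then minn z (maxn y x)
  else minn x z.
Proof. by rewrite /Lr_op; case: ifP => _; [|case: ifP => _];
  rewrite omeet_val ?ojoin_val. Qed.

Lemma mono_min (f : nat -> nat) (hf : {homo f : x y / x <= y}) x y :
  f (minn x y) = minn (f x) (f y).
Proof.
case: (leqP x y) => h; first by rewrite (minn_idPl (hf _ _ h)).
have h' := ltnW h; by rewrite (minn_idPr (hf _ _ h')).
Qed.

Lemma mono_max (f : nat -> nat) (hf : {homo f : x y / x <= y}) x y :
  f (maxn x y) = maxn (f x) (f y).
Proof.
case: (leqP x y) => h; first by rewrite (maxn_idPr (hf _ _ h)).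
have h' := ltnW h; by rewrite (maxn_idPl (hf _ _ h')).
Qed.

Section Alg.
Variable n : nat.

Definition ceq k (P : 'I_k -> 'I_k -> Prop) :=
  [/\ forall x, P x x, forall x y, P x y -> P y x,
      forall x y z, P x y -> P y z -> P x z &
      forall h x y z x' y' z', P x x' -> P y y' -> P z z' ->
        P (Lr_op n h x y z) (Lr_op n h x' y' z')].

Lemma ceq_eq k : ceq (fun x y : 'I_k => x = y).
Proof. split; [done| by move=> x y -> | by move=> x y z -> -> |
  by move=> h x y z x' y' z' -> -> ->]. Qed.

Lemma ceq_tot k : ceq (fun x y : 'I_k => True).
Proof. by split. Qed.

Definition clr (f : nat -> nat) k (x y : 'I_k) := f x = f y.

Lemma ceq_cl f k (hf : {homo f : x y / x <= y}) : ceq (@clr f k).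
Proof.
rewrite /clr; split; [done| by move=> x y -> | by move=> x y z -> -> |].
move=> h x y z x' y' z' ex ey ez; rewrite !Lr_val.
by case: ifP => _; [|case: ifP => _];
  rewrite !(mono_min hf) ?(mono_max hf) ?ex ?ey ?ez.
Qed.

End Alg.
Section B.
Variables (n : nat) (hn : 3 <= n) (T : Type) (t : nat -> T -> T -> T -> T).
Hypothesis t1 : forall x y z, t 1 x y z = x.
Hypothesis tn : forall x y z, t n.-1 x y z = z.
Hypothesis th : forall h, 2 <= h <= n.-2 -> forall x y, t h x y x = x.
Variables (a d : T).

Lemma ord0P k (x : 'I_k.+1) : x = ord0 <-> nat_of_ord x = 0.
Proof. by split => [->//|e]; apply: val_inj. Qed.

Lemma Z1 h k (x y z : 'I_k.+1) : x = ord0 -> h != n.-1 -> Lr_op n h x y z = ord0.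
Proof.
move=> /ord0P e hh; apply/ord0P; rewrite Lr_val e (negbTE hh).
by case: ifP => _; rewrite ?min0n ?minn0.
Qed.

Lemma Z3 h k (x y z : 'I_k.+1) : z = ord0 -> h != 1 -> Lr_op n h x y z = ord0.
Proof.
move=> /ord0P e hh; apply/ord0P; rewrite Lr_val e (negbTE hh).
by case: ifP => _; rewrite ?min0n ?minn0.
Qed.

Lemma inB_closed h (hh : 1 <= h <= n.-1) p q r :
  inB a d p -> inB a d q -> inB a d r -> inB a d (prod_op n t h p q r).
Proof.
move=> Hp _ Hr; rewrite /inB /prod_op /=.
case: (eqVneq h 1) => [eh|h1].
  have hn1 : h != n.-1 by rewrite eh; apply/eqP; lia.
  rewrite eh t1 in hn1 *.
  case: Hp => [[e2 e4]|[[e1 e2]|[[e1 e4]|e3]]].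
  - by left; rewrite Z1 // e2.
  - by right; left; rewrite !Z1 // ?e1 ?e2.
  - by right; right; left; rewrite Z1 // e1.
  - by right; right; right; rewrite Z1 // e3.
case: (eqVneq h n.-1) => [eh|hn1].
  rewrite eh tn in h1 *.
  case: Hr => [[e2 e4]|[[e1 e2]|[[e1 e4]|e3]]].
  - by left; rewrite Z3 // e2.
  - by right; left; rewrite !Z3 // ?e1 ?e2.
  - by right; right; left; rewrite Z3 // e1.
  - by right; right; right; rewrite Z3 // e3.
have hm : 2 <= h <= n.-2.
  move: hh h1 hn1; case/andP => ha hb /eqP ? /eqP ?; apply/andP; split; lia.
case: Hp => [[e2 e4]|[[e1 e2]|[[e1 e4]|e3]]];
  case: Hr => [[f2 f4]|[[f1 f2]|[[f1 f4]|f3]]];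
  first [ by right; left; rewrite !Z1 // ?e1 ?e2
        | by right; right; right; rewrite Z1 // e3
        | by right; left; rewrite !Z3 // ?f1 ?f2
        | by right; right; right; rewrite Z3 // f3
        | by left; rewrite Z1 // e4 f4 th
        | by right; left; rewrite [Lr_op _ _ (c2 p) _ _]Z1 // [Lr_op _ _ (c1 p) _ _]Z3
        | by right; left; rewrite [Lr_op _ _ (c1 p) _ _]Z1 // [Lr_op _ _ (c2 p) _ _]Z3
        | by right; right; left; rewrite Z1 // e4 f4 th ].
Qed.

Definition prel (P1 P2 : 'I_4 -> 'I_4 -> Prop) (P3 : 'I_2 -> 'I_2 -> Prop)
  (P4 : relP T) : relP (tup T) := fun p q =>
  [/\ inB a d p, inB a d q, P1 (c1 p) (c1 q), P2 (c2 p) (c2 q) &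
      P3 (c3 p) (c3 q) /\ P4 (c4 p) (c4 q)].

Lemma prel_cong P1 P2 P3 P4 : ceq n P1 -> ceq n P2 -> ceq n P3 ->
  is_cong (fun _ => True) n t P4 -> is_cong (inB a d) n (prod_op n t) (prel P1 P2 P3 P4).
Proof.
case=> r1 s1 t1' c1' [r2 s2 t2 c2'] [r3 s3 t3 c3'] [_ r4 s4 t4 c4'].
split.
- by move=> x y [].
- by move=> x hx; split; try split; try split; auto.
- by move=> x y [? ? ? ? []]; split; try split; auto.
- by move=> x y z [? ? ? ? []] ? ? [? ? ? ? []] ? ?; split; try split; eauto.
- move=> h hh x y z x' y' z' [? ? ? ? []] ? ? [? ? ? ? []] ? ? [? ? ? ? []] ? ?.
  split; try split; rewrite /prod_op /=; auto; exact: inB_closed.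
Qed.
End B.

Definition clg k := minn k 1 + (k - 2).
Definition clb k := minn (k - 1) 1.
Lemma clg_mono : {homo clg : x y / x <= y}.
Proof. rewrite /clg => x y h; lia. Qed.
Lemma clb_mono : {homo clb : x y / x <= y}.
Proof. rewrite /clb => x y h; lia. Qed.

Lemma key x y w : x < 4 -> y < 4 -> w < 4 -> clg 3 = clg x -> clb x = clb y ->
  clg y = clg w -> w != 0.
Proof. rewrite /clg /clb => *; apply/eqP; lia. Qed.

Definition o0 : 'I_4 := ord0.
Definition o1 : 'I_4 := @Ordinal 4 1 isT.
Definition o2 : 'I_4 := @Ordinal 4 2 isT.
Definition o3 : 'I_4 := @Ordinal 4 3 isT.
Definition i0 : 'I_2 := ord0.
Definition i1 : 'I_2 := @Ordinal 2 1 isT.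

Section C.
Variables (T : Type) (a d : T) (al be ga : relP T).

Definition Aa := prel a d (fun _ _ => True) (fun _ _ => True) (fun x y => x = y) al.
Definition Bb := prel a d (@clr clb 4) (@clr clb 4) (fun _ _ => True) be.
Definition Gg := prel a d (@clr clg 4) (@clr clg 4) (fun x y => x = y) ga.

Definition pp := Tup o3 o0 i1 a.
Definition qq := Tup o0 o3 i1 d.

Lemma ne0 k (x : 'I_k.+1) : nat_of_ord x != 0 -> x <> ord0.
Proof. by move=> /eqP h e; apply: h; rewrite e. Qed.

Lemma i1ne : i1 <> ord0. Proof. by move/(congr1 val). Qed.

Lemma left_path z1 z2 p3 : Gg pp z1 -> rmeet Aa Bb z1 z2 -> Gg z2 p3 -> c4 p3 = a.
Proof.
move=> [_ _ g1 _ [g3 _]] [[_ _ _ _ [a3 _]] [_ _ b1 _ _]] [_ Hp3 g1' _ [g3' _]].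
have h3 : c3 p3 <> ord0 by rewrite -g3' -a3 -g3; exact: i1ne.
have h1 : c1 p3 <> ord0.
  apply: ne0; apply: (key (ltn_ord (c1 z1)) (ltn_ord (c1 z2))) => //.
case: Hp3 => [[_ e]|[[e _]|[[e _]|e]]] //.
Qed.

Lemma right_path q3 w2 w1 : Gg q3 w2 -> rmeet Aa Bb w2 w1 -> Gg w1 qq -> c4 q3 = d.
Proof.
move=> [Hq3 _ _ g2 [g3 _]] [[_ _ _ _ [a3 _]] [_ _ _ b2 _]] [_ _ _ g2' [g3' _]].
have h3 : c3 q3 <> ord0 by rewrite g3 a3 g3'; exact: i1ne.
have h2 : c2 q3 <> ord0.
  apply: ne0; apply: (key (ltn_ord (c2 w1)) (ltn_ord (c2 w2))) => //.
case: Hq3 => [[e _]|[[_ e]|[[_ e]|e]]] //.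
Qed.

End C.

Lemma proj_cterm U V (f : U -> V) (a b c : relP U) (a' b' c' : relP V) :
  (forall x y, a x y -> a' (f x) (f y)) -> (forall x y, b x y -> b' (f x) (f y)) ->
  (forall x y, c x y -> c' (f x) (f y)) ->
  forall chi x y, cterm_eval a b c chi x y -> cterm_eval a' b' c' chi (f x) (f y).
Proof.
move=> ha hb hc; elim=> [| | |t1 IH1 t2 IH2|t1 IH1 t2 IH2] x y /=; auto.
- by move=> [z [h1 h2]]; exists (f z); split; auto.
- by move=> [h1 h2]; split; auto.
Qed.

Lemma proj_altc U V (f : U -> V) k : forall (X Y : relP U) (X' Y' : relP V),
  (forall x y, X x y -> X' (f x) (f y)) -> (forall x y, Y x y -> Y' (f x) (f y)) ->
  forall x y, altc X Y k x y -> altc X' Y' k (f x) (f y).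
Proof.
elim: k => [|k IH] X Y X' Y' hX hY x y /=; first by move=> ->.
case: k IH => [|k] IH; first exact: hX.
move=> [z [h1 h2]]; exists (f z); split; first exact: hX.
exact: (IH Y X Y' X').
Qed.

Lemma split3 U (X Y : relP U) j : forall x z, altc Y X (j.*2.+1).+3 x z ->
  exists y, altc Y X (j.*2.+1) x y /\ rcomp X (rcomp Y X) y z.
Proof.
elim: j => [|j IH] x z.
  move=> [y [h1 h2]]; by exists y.
move=> [y1 [h1 [y2 [h2 h3]]]].
have [y [H1 H2]] := IH _ _ h3.
exists y; split => //; exists y1; split => //; exists y2; by split.
Qed.

Section D.
Variables (n : nat) (hn : 3 <= n) (T : Type) (t : nat -> T -> T -> T -> T).
Hypothesis t1 : forall x y z, t 1 x y z = x.
Hypothesis tn : forall x y z, t n.-1 x y z = z.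
Hypothesis th : forall h, 2 <= h <= n.-2 -> forall x y, t h x y x = x.
Variables (al be ga : relP T).
Hypotheses (cal : is_cong (fun _ => True) n t al) (cbe : is_cong (fun _ => True) n t be)
  (cga : is_cong (fun _ => True) n t ga).
Variables (a b c d : T).
Hypotheses (had : al a d) (hab : be a b) (hbc1 : al b c) (hbc2 : ga b c) (hcd : be c d).

Lemma cA : is_cong (inB a d) n (prod_op n t) (Aa a d al).
Proof. apply: prel_cong => //; first [exact: ceq_tot|exact: ceq_eq]. Qed.
Lemma cB : is_cong (inB a d) n (prod_op n t) (Bb a d be).
Proof. apply: prel_cong => //; first [exact: (ceq_cl _ _ clb_mono)|exact: ceq_tot]. Qed.
Lemma cG : is_cong (inB a d) n (prod_op n t) (Gg a d ga).
Proof. apply: prel_cong => //; first [exact: (ceq_cl _ _ clg_mono)|exact: ceq_eq]. Qed.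

Lemma LHS_B : rmeet (Aa a d al) (rcomp (Bb a d be) (rcomp (rmeet (Aa a d al) (Gg a d ga)) (Bb a d be)))
  (pp a) (qq d).
Proof.
have hp : inB a d (pp a) by left; split.
have hq : inB a d (qq d) by right; right; left; split.
have hu : inB a d (Tup o2 o1 i0 b) by right; right; right.
have hv : inB a d (Tup o1 o2 i0 c) by right; right; right.
split; first by split => //; split.
exists (Tup o2 o1 i0 b); split; first by split => //; split.
exists (Tup o1 o2 i0 c); split; last by split => //; split.
by split; split => //; split.
Qed.

Lemma pA x y : Aa a d al x y -> al (c4 x) (c4 y). Proof. by case=> _ _ _ _ []. Qed.
Lemma pB x y : Bb a d be x y -> be (c4 x) (c4 y). Proof. by case=> _ _ _ _ []. Qed.
Lemma pG x y : Gg a d ga x y -> ga (c4 x) (c4 y). Proof. by case=> _ _ _ _ []. Qed.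

End D.

Theorem theorem3p5 (n : nat) (hn : 3 <= n)
  (T : Type) (t : nat -> T -> T -> T -> T)
  (t1 : forall x y z, t 1 x y z = x)
  (tn : forall x y z, t n.-1 x y z = z)
  (th : forall h, 2 <= h <= n.-2 -> forall x y, t h x y x = x) :
  (forall chi : cterm,
     (exists al be ga : relP T,
        [/\ is_cong (fun _ => True) n t al, is_cong (fun _ => True) n t be,
            is_cong (fun _ => True) n t ga &
            ~ rsub (rmeet al (rcomp be (rcomp (rmeet al ga) be)))
                   (cterm_eval al be ga chi)]) ->
     exists (a d : T) (al be ga : relP (tup T)),
       [/\ is_cong (inB a d) n (prod_op n t) al,
           is_cong (inB a d) n (prod_op n t) be,
           is_cong (inB a d) n (prod_op n t) ga &
           ~ rsub (rmeet al (rcomp be (rcomp (rmeet al ga) be)))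
                  (rcomp ga (rcomp (rmeet al be) (rcomp ga
                    (rcomp (cterm_eval al be ga chi)
                      (rcomp ga (rcomp (rmeet al be) ga))))))])
  /\
  (forall r : nat, odd r ->
     (exists al be ga : relP T,
        [/\ is_cong (fun _ => True) n t al, is_cong (fun _ => True) n t be,
            is_cong (fun _ => True) n t ga &
            ~ rsub (rmeet al (rcomp be (rcomp (rmeet al ga) be)))
                   (altc (rmeet al be) (rmeet al ga) r)]) ->
     exists (a d : T) (al be ga : relP (tup T)),
       [/\ is_cong (inB a d) n (prod_op n t) al,
           is_cong (inB a d) n (prod_op n t) be,
           is_cong (inB a d) n (prod_op n t) ga &
           ~ rsub (rmeet al (rcomp be (rcomp (rmeet al ga) be)))
                  (altc (rmeet al ga) (rmeet al be) (r + 6))]).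
Proof.
split.
- move=> chi [al [be [ga [cal cbe cga H]]]].
  have [x [y [[hxy [b [hxb [c [[hbc1 hbc2] hcy]]]]] Hn]]] := not_rsub H.
  exists x, y, (Aa x y al), (Bb x y be), (Gg x y ga); split;
    [exact: cA|exact: cB|exact: cG|].
  move=> Hs; have := Hs _ _ (LHS_B hxy hxb hbc1 hbc2 hcy).
  move=> [z1 [g1 [z2 [ab [p3 [g2 [q3 [hchi [w2 [g3 [w1 [ab' g4]]]]]]]]]]]].
  have e1 := left_path g1 ab g2; have e2 := right_path g3 ab' g4.
  apply: Hn; rewrite -e1 -e2.
  apply: (proj_cterm _ _ _ hchi); [exact: pA|exact: pB|exact: pG].
- move=> r hr [al [be [ga [cal cbe cga H]]]].
  have [x [y [[hxy [b [hxb [c [[hbc1 hbc2] hcy]]]]] Hn]]] := not_rsub H.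
  exists x, y, (Aa x y al), (Bb x y be), (Gg x y ga); split;
    [exact: cA|exact: cB|exact: cG|].
  move=> Hs; have := Hs _ _ (LHS_B hxy hxb hbc1 hbc2 hcy).
  have [j ej] : exists j, r = j.*2.+1.
    by exists r./2; rewrite -[r in LHS]odd_double_half hr add1n.
  rewrite ej (_ : j.*2.+1 + 6 = (j.*2.+1).+3.+3); last by rewrite addnC.
  move=> [z1 [h1 [z2 [h2 [p3 [h3 h4]]]]]].
  have [q3 [hm [w2 [k1 [w1 [k2 k3]]]]]] := split3 h4.
  have e1 := left_path h1.2 h2 h3.2; have e2 := right_path k1.2 k2 k3.2.
  apply: Hn; rewrite ej -e1 -e2.
  apply: (proj_altc _ _ hm) => u v [h h'].
    by split; [exact: pA h|exact: pB h'].
  by split; [exact: pA h|exact: pG h'].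
Qed.
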